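(* Let $\pi_3=2\int_0^1\frac{\mathrm{d}t}{\sqrt{1-t^6}}$ and let $\mathrm{sleaf}_3:\mathbb{R}\to\mathbb{R}$ be the leaf function of basis $3$. Let $m$ be an integer, $l$ real, $s=\mathrm{sleaf}_3(l)$, and $$A=\frac12\sqrt{-1-s^2+2s^4+\frac{2-2s^6}{\sqrt{1+s^2+s^4}}}.$$ (i) If $\frac{\pi_3}{2}(4m-1)\le l\le\frac{\pi_3}{2}(4m+1)$, then $\Bigl(\mathrm{sleaf}_3\Bigl(\frac l2\Bigr)\Bigr)^2=-\frac12 s^2+\frac12\sqrt{1+s^2+s^4}-A$. (ii) If $\frac{\pi_3}{2}(4m+1)\le l\le\frac{\pi_3}{2}(4m+3)$, then $\Bigl(\mathrm{sleaf}_3\Bigl(\frac l2\Bigr)\Bigr)^2=-\frac12 s^2+\frac12\sqrt{1+s^2+s^4}+A$.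
   Context: For a natural number $n$, the leaf function $\mathrm{sleaf}_n:\mathbb{R}\to\mathbb{R}$ is the solution of $\frac{\mathrm{d}^2r}{\mathrm{d}l^2}=-n\,r^{2n-1}$ with $r(0)=0$, $r'(0)=1$; it is periodic with period $2\pi_n$, where $\pi_n=2\int_0^1\frac{\mathrm{d}t}{\sqrt{1-t^{2n}}}$, and on $[-\pi_n/2,\pi_n/2]$ it is the inverse of $r\mapsto\int_0^r\frac{\mathrm{d}t}{\sqrt{1-t^{2n}}}$. *)

(* Defs.v *)
From Stdlib Require Import Reals Lra Lia ZArith.
From Coquelicot Require Import Coquelicot.
Open Scope R_scope.

Definition pi_n (n : nat) : R :=
  2 * RInt_gen (fun t => / sqrt (1 - t ^ (2 * n))) (at_point 0) (at_left 1).

(* r is the leaf function sleaf_n: the solution of r'' = - n r^(2n-1),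
   r(0) = 0, r'(0) = 1 on all of R (the solution exists and is unique). *)
Definition is_sleaf (n : nat) (r : R -> R) : Prop :=
  exists r' : R -> R,
    (forall x, is_derive r x (r' x)) /\
    (forall x, is_derive r' x (- INR n * r x ^ (2 * n - 1))) /\
    r 0 = 0 /\ r' 0 = 1.

(* Main.v *)
Require Import Defs.
From Stdlib Require Import Reals ZArith Lra Lia Classical.
From Coquelicot Require Import Coquelicot.
Open Scope R_scope.

Lemma cont_of_der f df x : is_derive f x df -> continuity_pt f x.
Proof.
  intros H. apply continuity_pt_filterlim.
  apply (ex_derive_continuous f x). eexists; eauto.
Qed.

Lemma mono_le f df a b :
  (forall x, a <= x <= b -> is_derive f x (df x)) ->
  (forall x, a <= x <= b -> df x <= 0) -> a <= b -> f b <= f a.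
Proof.
  intros Hd Hs Hab.
  destruct (MVT_gen f a b df) as [c [Hc Heq]].
  - intros x Hx. apply Hd. unfold Rmin, Rmax in Hx; destruct Rle_dec; lra.
  - intros x Hx. apply (cont_of_der _ (df x)). apply Hd.
    unfold Rmin, Rmax in Hx; destruct Rle_dec; lra.
  - assert (df c <= 0). { apply Hs. unfold Rmin, Rmax in Hc; destruct Rle_dec; lra. }
    nra.
Qed.

Lemma const_der f a b :
  (forall x, is_derive f x 0) -> f a = f b.
Proof.
  intros H.
  destruct (Rle_dec a b).
  - assert (f b <= f a) by (apply (mono_le f (fun _ => 0)); auto; intros; lra).
    assert (- f b <= - f a).
    { apply (mono_le (fun x => - f x) (fun _ => 0)); auto; try (intros; lra).
      intros. replace 0 with (- 0) by ring. apply (is_derive_opp f x 0). auto. }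
    lra.
  - assert (f a <= f b) by (apply (mono_le f (fun _ => 0)); auto; intros; lra).
    assert (- f a <= - f b).
    { apply (mono_le (fun x => - f x) (fun _ => 0)); auto; try (intros; lra).
      intros. replace 0 with (- 0) by ring. apply (is_derive_opp f x 0). auto. }
    lra.
Qed.

Ltac fixD := repeat match goal with |- context [Derive ?f ?y] =>
   match goal with H : forall z, is_derive ?g z _ |- _ =>
      rewrite (is_derive_unique f y _ (H y)) end end.
Ltac exD := repeat match goal with
  | |- _ /\ _ => split
  | |- True => exact I
  | |- ex_derive ?f ?y => match goal with H : forall z, is_derive ?g z _ |- _ =>
        exact (ex_intro _ _ (H y)) end end.

Lemma pow5_lip a1 a2 M : Rabs a1 <= M -> Rabs a2 <= M ->
  Rabs (a1^5 - a2^5) <= 5 * M^4 * Rabs (a1 - a2).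
Proof.
  intros H1 H2.
  replace (a1^5 - a2^5) with ((a1 - a2) * (a1^4 + a1^3*a2 + a1^2*a2^2 + a1*a2^3 + a2^4)) by ring.
  rewrite Rabs_mult. rewrite Rmult_comm. apply Rmult_le_compat_r; [apply Rabs_pos|].
  assert (h0 : 0 <= Rabs a1) by apply Rabs_pos.
  assert (h0' : 0 <= Rabs a2) by apply Rabs_pos.
  assert (forall i j, Rabs (a1^i * a2^j) <= M^(i+j)).
  { intros i j. rewrite Rabs_mult, <- !RPow_abs, pow_add.
    apply Rmult_le_compat; try apply pow_le; try apply Rabs_pos; apply pow_incr; auto. }
  pose proof (H 4%nat 0%nat) as h1. pose proof (H 3%nat 1%nat) as h2. pose proof (H 2%nat 2%nat) as h3.
  pose proof (H 1%nat 3%nat) as h4. pose proof (H 0%nat 4%nat) as h5.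
  replace (4+0)%nat with 4%nat in * by reflexivity.
  replace (3+1)%nat with 4%nat in * by reflexivity.
  replace (2+2)%nat with 4%nat in * by reflexivity.
  replace (1+3)%nat with 4%nat in * by reflexivity.
  replace (0+4)%nat with 4%nat in * by reflexivity.
  rewrite pow_O, Rmult_1_r in h1. rewrite pow_O, Rmult_1_l in h5. rewrite pow_1 in h2, h4.
  pose proof (Rabs_triang (a1^4 + a1^3*a2 + a1^2*a2^2 + a1*a2^3) (a2^4)).
  pose proof (Rabs_triang (a1^4 + a1^3*a2 + a1^2*a2^2) (a1*a2^3)).
  pose proof (Rabs_triang (a1^4 + a1^3*a2) (a1^2*a2^2)).
  pose proof (Rabs_triang (a1^4) (a1^3*a2)).
  lra.
Qed.

Lemma uniq_sys (c M : R) (a1 b1 a2 b2 : R -> R) t0 :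
  (forall x, is_derive a1 x (b1 x)) -> (forall x, is_derive b1 x (c * a1 x ^ 5)) ->
  (forall x, is_derive a2 x (b2 x)) -> (forall x, is_derive b2 x (c * a2 x ^ 5)) ->
  (forall x, Rabs (a1 x) <= M) -> (forall x, Rabs (a2 x) <= M) ->
  a1 t0 = a2 t0 -> b1 t0 = b2 t0 -> forall x, a1 x = a2 x /\ b1 x = b2 x.
Proof.
  intros Ha1 Hb1 Ha2 Hb2 M1 M2 E1 E2.
  set (E := fun x => (a1 x - a2 x)^2 + (b1 x - b2 x)^2).
  set (dE := fun x => 2 * (a1 x - a2 x) * (b1 x - b2 x)
                      + 2 * (b1 x - b2 x) * (c * (a1 x ^5 - a2 x ^5))).
  assert (HdE : forall x, is_derive E x (dE x)).
  { intros x. unfold E, dE. auto_derive; [exD|]. fixD. ring. }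
  set (K := 1 + Rabs c * 5 * M^4).
  assert (HK : forall x, Rabs (dE x) <= K * E x).
  { intros x. unfold dE, E, K.
    pose proof (pow5_lip _ _ _ (M1 x) (M2 x)).
    set (d := a1 x - a2 x) in *. set (e := b1 x - b2 x).
    set (q := a1 x ^ 5 - a2 x ^ 5) in *.
    assert (Rabs (2 * d * e) <= d^2 + e^2).
    { rewrite !Rabs_mult. rewrite (Rabs_right 2) by lra.
      rewrite <- (Rabs_pos_eq (d^2)) by nra. rewrite <- (Rabs_pos_eq (e^2)) by nra.
      rewrite <- !RPow_abs. pose proof (pow2_ge_0 (Rabs d - Rabs e)). nra. }
    assert (Rabs (2 * e * (c * q)) <= Rabs c * 5 * M^4 * (d^2 + e^2)).
    { rewrite !Rabs_mult. rewrite (Rabs_right 2) by lra.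
      assert (0 <= M) by (pose proof (Rabs_pos (a1 x)); specialize (M1 x); lra).
      assert (Hd2 : 2 * Rabs e * Rabs d <= d^2 + e^2).
      { rewrite <- (Rabs_pos_eq (d^2)) by nra. rewrite <- (Rabs_pos_eq (e^2)) by nra.
        rewrite <- !RPow_abs. pose proof (pow2_ge_0 (Rabs d - Rabs e)). nra. }
      pose proof (Rabs_pos c). pose proof (Rabs_pos e). pose proof (Rabs_pos q).
      assert (0 <= M^4) by (apply pow_le; auto).
      assert (Rabs e * Rabs q <= Rabs e * (5 * M^4 * Rabs d)) by (apply Rmult_le_compat_l; auto).
      assert (Rabs c * (Rabs e * Rabs q) <= Rabs c * (Rabs e * (5 * M^4 * Rabs d))) by (apply Rmult_le_compat_l; auto).
      assert (Rabs c * 5 * M^4 * (2 * Rabs e * Rabs d) <= Rabs c * 5 * M^4 * (d^2+e^2)).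
      { apply Rmult_le_compat_l; auto. repeat apply Rmult_le_pos; auto; lra. }
      nra. }
    eapply Rle_trans; [apply Rabs_triang|].
    replace ((1 + Rabs c * 5 * M ^ 4) * (d ^ 2 + e ^ 2)) with
      ((d^2 + e^2) + Rabs c * 5 * M ^ 4 * (d ^ 2 + e ^ 2)) by ring. lra. }
  assert (E0 : E t0 = 0) by (unfold E; rewrite E1, E2; ring).
  assert (Epos : forall x, 0 <= E x) by (intros; unfold E; pose proof (pow2_ge_0 (a1 x - a2 x)); pose proof (pow2_ge_0 (b1 x - b2 x)); lra).
  assert (Edef : forall x, E x = (a1 x - a2 x)^2 + (b1 x - b2 x)^2) by reflexivity.
  clearbody E dE.
  assert (HE : forall x, E x = 0).
  { intros x. destruct (Rle_dec t0 x).
    - assert (E x * exp (- K * x) <= E t0 * exp (- K * t0)).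
      { apply (mono_le (fun x => E x * exp (- K * x))
           (fun x => (dE x - K * E x) * exp (- K * x))); auto.
        + intros y _. auto_derive.
          * exists (dE y). auto.
          * fixD. ring.
        + intros y _. pose proof (exp_pos (- K * y)). pose proof (HK y).
          pose proof (Rle_abs (dE y)). nra. }
      rewrite E0 in H. pose proof (exp_pos (- K * x)). pose proof (Epos x). nra.
    - assert (- (E t0 * exp (K * t0)) <= - (E x * exp (K * x))).
      { apply (mono_le (fun x => - (E x * exp (K * x)))
           (fun x => - ((dE x + K * E x) * exp (K * x)))); auto; try lra.
        + intros y _. auto_derive.
          * exists (dE y). auto.
          * fixD. ring.
        + intros y _. pose proof (exp_pos (K * y)) as q1. pose proof (HK y) as q2.
          pose proof (Rle_abs (- dE y)) as q3. rewrite Rabs_Ropp in q3. nra. }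
      rewrite E0 in H. pose proof (exp_pos (K * x)). pose proof (Epos x). nra. }
  intros x. specialize (HE x). rewrite Edef in HE.
  pose proof (pow2_ge_0 (a1 x - a2 x)). pose proof (pow2_ge_0 (b1 x - b2 x)).
  split; nra.
Qed.

Definition ODE (r p : R -> R) :=
  (forall x, is_derive r x (p x)) /\ (forall x, is_derive p x (-3 * r x ^ 5)).

Lemma energy r p : ODE r p -> r 0 = 0 -> p 0 = 1 -> forall x, p x ^ 2 + r x ^ 6 = 1.
Proof.
  intros [Hr Hp] r0 p0 x.
  assert (H : forall x, is_derive (fun x => p x ^ 2 + r x ^ 6) x 0).
  { intros y. auto_derive; [exD|]. fixD. ring. }
  pose proof (const_der _ x 0 H). simpl in H0. rewrite r0, p0 in H0. simpl in H0. lra.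
Qed.

Lemma bounds r p : ODE r p -> r 0 = 0 -> p 0 = 1 -> forall x, Rabs (r x) <= 1 /\ Rabs (p x) <= 1.
Proof.
  intros H r0 p0 x. pose proof (energy r p H r0 p0 x) as E.
  pose proof (pow2_ge_0 (p x)). assert (0 <= r x ^ 6) by (replace 6%nat with (2*3)%nat by reflexivity; rewrite pow_mult; apply pow_le; apply pow2_ge_0).
  split.
  - apply Rabs_le. assert (h6 : r x ^ 6 = (r x ^ 2) ^ 3) by ring.
    set (a := r x ^ 2) in *. assert (0 <= a) by (unfold a; apply pow2_ge_0).
    assert (a <= 1) by nra. unfold a in *. nra.
  - apply Rabs_le. nra.
Qed.

Lemma z_der r p y : ODE r p ->
  is_derive (fun y => / sqrt (1 + 8 * r y ^ 6)) y
    (-24 * r y ^ 5 * p y * (/ sqrt (1 + 8 * r y ^ 6)) ^ 3).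
Proof.
  intros [Hr Hp].
  assert (h0 : 0 <= r y ^ 6) by (replace 6%nat with (2*3)%nat by reflexivity; rewrite pow_mult; apply pow_le; apply pow2_ge_0).
  assert (hp : 0 < 1 + 8 * r y ^ 6) by lra.
  auto_derive; change (r y * (r y * (r y * (r y * (r y * (r y * 1)))))) with (r y ^ 6).
  - repeat split; try exD; try lra. pose proof (sqrt_lt_R0 _ hp). lra.
  - fixD. pose proof (sqrt_lt_R0 _ hp). pose proof (sqrt_sqrt _ (Rlt_le _ _ hp)).
    set (D := sqrt (1 + 8 * r y ^ 6)) in *. field; lra.
Qed.

Lemma pow6_nonneg x : 0 <= x ^ 6.
Proof. replace 6%nat with (2*3)%nat by reflexivity; rewrite pow_mult; apply pow_le; apply pow2_ge_0. Qed.

Lemma doubling r p : ODE r p -> r 0 = 0 -> p 0 = 1 -> forall y,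
  r (2 * y) = 2 * r y * p y * / sqrt (1 + 8 * r y ^ 6) /\
  2 * p (2 * y) = 2 * (1 - 20 * r y ^ 6 - 8 * r y ^ 12) * (/ sqrt (1 + 8 * r y ^ 6)) ^ 3.
Proof.
  intros HO r0 p0.
  pose proof (z_der r p) as Hz0.
  pose proof (energy r p HO r0 p0) as En.
  pose proof (bounds r p HO r0 p0) as Bd.
  set (z := fun y => / sqrt (1 + 8 * r y ^ 6)).
  assert (Hz : forall y, is_derive z y (-24 * r y ^ 5 * p y * z y ^ 3)) by (intros; apply Hz0; auto).
  assert (Ez : forall y, z y ^ 2 * (1 + 8 * r y ^ 6) - 1 = 0).
  { intros y. unfold z. pose proof (pow6_nonneg (r y)).
    assert (hp : 0 < 1 + 8 * r y ^ 6) by lra.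
    pose proof (sqrt_lt_R0 _ hp). pose proof (sqrt_sqrt _ (Rlt_le _ _ hp)).
    set (D := sqrt (1 + 8 * r y ^ 6)) in *. rewrite <- H1. field. lra. }
  assert (zpos : forall y, 0 < z y /\ z y <= 1).
  { intros y. unfold z. pose proof (pow6_nonneg (r y)).
    assert (hp : 0 < 1 + 8 * r y ^ 6) by lra.
    pose proof (sqrt_lt_R0 _ hp). split. apply Rinv_0_lt_compat; auto.
    assert (hs : 1 <= sqrt (1 + 8 * r y ^ 6)). { pose proof (sqrt_le_1_alt 1 (1 + 8 * r y ^ 6)). rewrite sqrt_1 in H1. apply H1. lra. }
    pose proof (Rinv_le_contravar 1 _ Rlt_0_1 hs) as hh. rewrite Rinv_1 in hh. exact hh. }
  assert (E1 : forall y, p y ^ 2 + r y ^ 6 - 1 = 0) by (intros y; rewrite En; ring).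
  change (forall y, r (2 * y) = 2 * r y * p y * z y /\
    2 * p (2 * y) = 2 * (1 - 20 * r y ^ 6 - 8 * r y ^ 12) * z y ^ 3).
  clearbody z. destruct HO as [Hr Hp].
  apply (uniq_sys (-12) 2 (fun y => r (2 * y)) (fun y => 2 * p (2 * y))
     (fun y => 2 * r y * p y * z y) (fun y => 2 * (1 - 20 * r y ^ 6 - 8 * r y ^ 12) * z y ^ 3) 0).
  - intros x. auto_derive; [exD|]. fixD. ring.
  - intros x. auto_derive; [exD|]. fixD. ring.
  - intros x. auto_derive; [exD|]. fixD.
    transitivity (2 * (1 - 20 * r x ^ 6 - 8 * r x ^ 12) * z x ^ 3
      + (p x ^ 2 + r x ^ 6 - 1) * (2 * z x - 48 * r x ^ 6 * z x ^ 3)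
      - (2 - 8 * r x ^ 6) * z x * (z x ^ 2 * (1 + 8 * r x ^ 6) - 1)); [ring|].
    rewrite E1, Ez. ring.
  - intros x. auto_derive; [exD|]. fixD.
    transitivity (-12 * (2 * r x * p x * z x) ^ 5
      + 384 * r x ^ 5 * p x * z x ^ 5 * (p x ^ 2 + 1 - r x ^ 6) * (p x ^ 2 + r x ^ 6 - 1)
      + r x ^ 5 * p x * z x ^ 3 * (240 + 192 * r x ^ 6) * (z x ^ 2 * (1 + 8 * r x ^ 6) - 1)); [ring|].
    rewrite E1, Ez. ring.
  - intros x. destruct (Bd (2 * x)). lra.
  - intros x. destruct (Bd x) as [b1 b2]. destruct (zpos x).
    rewrite Rabs_mult, Rabs_mult, Rabs_mult, (Rabs_right 2) by lra.
    rewrite (Rabs_right (z x)) by lra.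
    pose proof (Rabs_pos (r x)). pose proof (Rabs_pos (p x)).
    assert (Rabs (r x) * Rabs (p x) <= 1) by nra.
    assert (Rabs (r x) * Rabs (p x) * z x <= 1) by nra. lra.
  - simpl. rewrite Rmult_0_r, r0. ring.
  - rewrite Rmult_0_r, p0, r0.
    assert (z 0 = 1).
    { pose proof (Ez 0). rewrite r0 in H. destruct (zpos 0). nra. }
    rewrite H. ring.
Qed.

Lemma cont_eps f a : continuity_pt f a -> forall eps, 0 < eps ->
  exists d, 0 < d /\ forall x, Rabs (x - a) < d -> Rabs (f x - f a) < eps.
Proof.
  intros H eps He. destruct (H eps He) as [d [Hd H2]].
  exists d. split; auto. intros x Hx.
  destruct (Req_dec x a) as [->|Hne].
  - unfold Rminus. rewrite Rplus_opp_r, Rabs_R0. auto.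
  - apply (H2 x). split. split. exact I. auto. exact Hx.
Qed.

Lemma der_le_stuff r p : ODE r p -> r 0 = 0 -> p 0 = 1 -> forall b,
  (forall x, 0 <= x <= b -> 0 < p x) -> b <= 400.
Proof.
  intros HO r0 p0 b Hb.
  pose proof (bounds r p HO r0 p0) as Bd. pose proof (energy r p HO r0 p0) as En.
  destruct HO as [Hr Hp].
  destruct (Rle_dec b (1/2)) as [hb|hb]; [lra|].
  assert (rmono : forall x y, 0 <= x <= y -> y <= b -> r x <= r y).
  { intros x y Hxy Hyb.
    assert (- r y <= - r x).
    { apply (mono_le (fun t => - r t) (fun t => - p t)); try lra.
      - intros t _. apply (is_derive_opp r t (p t)). auto.
      - intros t Ht. assert (0 < p t) by (apply Hb; lra). lra. }
    lra. }
  assert (r0pos : forall x, 0 <= x <= b -> 0 <= r x).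
  { intros x Hx. rewrite <- r0. apply rmono; lra. }
  assert (rle : forall x, 0 <= x -> r x <= x).
  { intros x Hx. assert (r x - x <= r 0 - 0).
    { apply (mono_le (fun t => r t - t) (fun t => p t - 1)); try lra.
      - intros t _. auto_derive; [exD|]. fixD. ring.
      - intros t _. destruct (Bd t) as [_ h]. apply Rabs_le_between in h. lra. }
    lra. }
  assert (pge : forall x, 0 <= x <= 1/2 -> 1/2 <= p x).
  { intros x Hx. pose proof (rle x (proj1 Hx)). pose proof (r0pos x ltac:(lra)).
    pose proof (En x). assert (0 < p x) by (apply Hb; lra).
    assert (r x ^ 6 <= 1/64).
    { replace (1/64) with ((1/2)^6) by field. apply pow_incr. lra. }
    nra. }
  assert (r (1/2) >= 1/4).
  { assert ((1/2) * (1/2) - r (1/2) <= (1/2) * 0 - r 0).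
    { apply (mono_le (fun t => (1/2) * t - r t) (fun t => 1/2 - p t)); try lra.
      - intros t _. auto_derive; [exD|]. fixD. ring.
      - intros t Ht. pose proof (pge t Ht). lra. }
    lra. }
  assert (p b - (- 3 / 1024) * b <= p (1/2) - (-3/1024) * (1/2)).
  { apply (mono_le (fun t => p t - (-3/1024) * t) (fun t => -3 * r t ^ 5 + 3/1024)); try lra.
    - intros t _. auto_derive; [exD|]. fixD. lra.
    - intros t Ht. assert (1/4 <= r t) by (pose proof (rmono (1/2) t ltac:(lra) ltac:(lra)); lra).
      assert ((1/4)^5 <= r t ^ 5) by (apply pow_incr; lra). lra. }
  assert (0 < p b) by (apply Hb; lra). destruct (Bd (1/2)) as [_ h]. apply Rabs_le_between in h.
  lra.
Qed.

Lemma period r p : ODE r p -> r 0 = 0 -> p 0 = 1 ->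
  exists T, 0 < T /\ (forall x, 0 <= x < T -> 0 < p x) /\ p T = 0 /\ r T = 1.
Proof.
  intros HO r0 p0.
  pose proof (bounds r p HO r0 p0) as Bd. pose proof (energy r p HO r0 p0) as En.
  pose proof (der_le_stuff r p HO r0 p0) as Bnd.
  destruct HO as [Hr Hp].
  assert (pc : forall x, continuity_pt p x) by (intros x; apply (cont_of_der _ _ _ (Hp x))).
  set (S := fun b => 0 <= b /\ forall x, 0 <= x <= b -> 0 < p x).
  destruct (completeness S) as [T [HT1 HT2]].
  - exists 400. intros b [hb1 hb2]. apply Bnd; auto.
  - exists 0. split; [lra|]. intros x Hx. replace x with 0 by lra. lra.
  - assert (pos_near : forall a, 0 < p a -> exists d, 0 < d /\ forall x, Rabs (x - a) < d -> 0 < p x).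
    { intros a Ha. destruct (cont_eps p a (pc a) (p a) Ha) as [d [Hd H]].
      exists d. split; auto. intros x Hx. specialize (H x Hx). apply Rabs_def2 in H. lra. }
    assert (neg_near : forall a, p a < 0 -> exists d, 0 < d /\ forall x, Rabs (x - a) < d -> p x < 0).
    { intros a Ha. destruct (cont_eps p a (pc a) (- p a)) as [d [Hd H]]; [lra|].
      exists d. split; auto. intros x Hx. specialize (H x Hx). apply Rabs_def2 in H. lra. }
    assert (Tpos : 0 < T).
    { destruct (pos_near 0) as [d [Hd H]]; [lra|].
      assert (S (d/2)). { split; [lra|]. intros x Hx. apply H. rewrite Rabs_right; lra. }
      pose proof (HT1 _ H0). lra. }
    assert (below : forall x, 0 <= x < T -> 0 < p x).
    { intros x Hx. destruct (Rle_dec x 0) as [h|h].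
      - replace x with 0 by lra. lra.
      - destruct (classic (exists b, S b /\ x <= b)) as [[b [[_ Hb] Hxb]]|Hn].
        + apply Hb. lra.
        + assert (is_upper_bound S x).
          { intros b Hb. destruct (Rle_dec b x); auto. exfalso. apply Hn. exists b. split; auto. lra. }
          pose proof (HT2 _ H). lra. }
    assert (pT : p T = 0).
    { destruct (Rtotal_order (p T) 0) as [h|[h|h]]; auto; exfalso.
      - destruct (neg_near T h) as [d [Hd H]].
        set (x := Rmax 0 (T - d/2)).
        assert (0 <= x < T) by (unfold x, Rmax; destruct Rle_dec; lra).
        assert (p x < 0). { apply H. unfold x, Rmax; destruct Rle_dec; rewrite Rabs_left; lra. }
        pose proof (below x H0). lra.
      - destruct (pos_near T h) as [d [Hd H]].
        assert (S (T + d/2)).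
        { split; [lra|]. intros x Hx. destruct (Rlt_dec x T). apply below; lra.
          apply H. rewrite Rabs_right; lra. }
        pose proof (HT1 _ H0). lra. }
    exists T. split; auto. split; auto. split; auto.
    assert (0 <= r T).
    { rewrite <- r0. assert (- r T <= - r 0).
      { apply (mono_le (fun t => - r t) (fun t => - p t)); try lra.
        - intros t _. auto_derive; [exD|]. fixD. ring.
        - intros t Ht. destruct (Rlt_dec t T). pose proof (below t ltac:(lra)). lra.
          replace t with T by lra. lra. }
      lra. }
    pose proof (En T). rewrite pT in H0.
    assert (h6 : r T ^ 6 = (r T ^ 2) ^ 3) by ring. rewrite h6 in H0.
    set (a := r T ^ 2) in *. assert (0 <= a) by (unfold a; apply pow2_ge_0).
    assert (a = 1) by nra. unfold a in H2. nra.
Qed.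

Lemma sign_p r p : ODE r p -> r 0 = 0 -> p 0 = 1 -> forall T,
  0 < T -> (forall x, 0 <= x < T -> 0 < p x) -> p T = 0 -> r T = 1 ->
  forall (m : Z) x,
   (T * (4 * IZR m - 1) <= x <= T * (4 * IZR m + 1) -> 0 <= p x) /\
   (T * (4 * IZR m + 1) <= x <= T * (4 * IZR m + 3) -> p x <= 0).
Proof.
  intros HO r0 p0 T Tpos below pT rT.
  pose proof (bounds r p HO r0 p0) as Bd.
  destruct HO as [Hr Hp].
  assert (odd : forall x, - r (- x) = r x /\ p (- x) = p x).
  { apply (uniq_sys (-3) 1 (fun x => - r (- x)) (fun x => p (- x)) r p 0); auto.
    - intros x. auto_derive; [exD|]. fixD. ring.
    - intros x. auto_derive; [exD|]. fixD. ring.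
    - intros x. rewrite Rabs_Ropp. apply Bd.
    - intros x. apply Bd.
    - rewrite Ropp_0, r0. ring.
    - rewrite Ropp_0. auto. }
  assert (refl : forall x, r (2 * T - x) = r x /\ - p (2 * T - x) = p x).
  { apply (uniq_sys (-3) 1 (fun x => r (2 * T - x)) (fun x => - p (2 * T - x)) r p T); auto.
    - intros x. auto_derive; [exD|]. fixD. unfold Rminus. lra.
    - intros x. auto_derive; [exD|]. fixD. unfold Rminus. ring.
    - intros x. apply Bd.
    - intros x. apply Bd.
    - replace (2 * T - T) with T by ring. auto.
    - replace (2 * T - T) with T by ring. rewrite pT. ring. }
  assert (sh2 : forall x, p (x + 2 * T) = - p x).
  { intros x. destruct (refl (- x)) as [_ h]. destruct (odd x) as [_ h'].
    replace (2 * T - - x) with (x + 2 * T) in h by ring. lra. }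
  assert (sh4 : forall x, p (x + 4 * T) = p x).
  { intros x. replace (x + 4 * T) with ((x + 2 * T) + 2 * T) by ring. rewrite !sh2. ring. }
  assert (shn : forall (n : nat) x, p (x + 4 * T * INR n) = p x).
  { induction n; intros x. simpl. rewrite Rmult_0_r, Rplus_0_r. auto.
    rewrite S_INR. replace (x + 4 * T * (INR n + 1)) with ((x + 4 * T * INR n) + 4 * T) by ring.
    rewrite sh4. auto. }
  assert (shz : forall (m : Z) x, p (x - 4 * T * IZR m) = p x).
  { intros m x. destruct (Z_le_gt_dec 0 m) as [h|h].
    - rewrite <- (Z2Nat.id m) by lia. rewrite <- INR_IZR_INZ.
      rewrite <- (shn (Z.to_nat m) (x - 4 * T * INR (Z.to_nat m))). f_equal. ring.
    - replace m with (- Z.of_nat (Z.to_nat (- m)))%Z by lia.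
      rewrite opp_IZR, <- INR_IZR_INZ.
      replace (x - 4 * T * - INR (Z.to_nat (- m))) with (x + 4 * T * INR (Z.to_nat (- m))) by ring.
      apply shn. }
  assert (s1 : forall x, - T <= x <= T -> 0 <= p x).
  { intros x Hx. destruct (Rle_dec 0 x).
    - destruct (Rlt_dec x T). pose proof (below x ltac:(lra)). lra. replace x with T by lra. lra.
    - destruct (odd x) as [_ h]. rewrite <- h. destruct (Rlt_dec (-x) T).
      pose proof (below (-x) ltac:(lra)). lra. replace (-x) with T by lra. lra. }
  intros m x. split; intros Hx.
  - rewrite <- (shz m x). apply s1. nra.
  - rewrite <- (shz m x). replace (x - 4 * T * IZR m) with ((x - 4 * T * IZR m - 2 * T) + 2 * T) by ring.
    rewrite sh2. assert (0 <= p (x - 4 * T * IZR m - 2 * T)) by (apply s1; nra). lra.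
Qed.

Definition f6 := fun t : R => / sqrt (1 - t ^ (2 * 3)).

Lemma f6_cont z : Rabs z < 1 -> continuous f6 z.
Proof.
  intros Hz. apply (@ex_derive_continuous R_AbsRing R_NormedModule f6 z). unfold f6.
  assert (z ^ 6 < 1).
  { apply Rabs_def2 in Hz. assert (0 <= z^2 < 1) by (split; [apply pow2_ge_0| nra]).
    replace (z^6) with ((z^2)^3) by ring. set (a := z^2) in *. assert (a * a <= a) by nra. assert (a*a*a <= a*a) by nra. simpl. nra. }
  auto_derive. change (z * (z * (z * (z * (z * (z * 1)))))) with (z ^ 6).
  split; [lra|]. split; [|exact I]. pose proof (sqrt_lt_R0 (1 - z^6)). unfold Rminus in H0. lra.
Qed.

Lemma ball_R (c e y : R) : ball c e y <-> Rabs (y - c) < e.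
Proof. reflexivity. Qed.

Lemma F_der c : Rabs c < 1 -> is_derive (fun c => RInt f6 0 c) c (f6 c).
Proof.
  intros Hc. apply (is_derive_RInt f6 (fun c => RInt f6 0 c) 0 c); [|apply f6_cont; auto].
  assert (hd : 0 < (1 - Rabs c) / 2) by lra.
  exists (mkposreal _ hd). intros y Hy. rewrite ball_R in Hy. simpl in Hy.
  apply (@RInt_correct R_CompleteNormedModule). apply (@ex_RInt_continuous R_CompleteNormedModule). intros z Hz. apply f6_cont.
  assert (Rabs y < 1).
  { pose proof (Rabs_triang_inv y c). lra. }

  unfold Rmin, Rmax in Hz. apply Rabs_def2 in H. destruct Rle_dec; apply Rabs_def1; lra.
Qed.

Lemma is_derive_eq (f : R -> R) x l l' : is_derive f x l -> l = l' -> is_derive f x l'.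
Proof. intros H ->. auto. Qed.

Lemma int_T r p T : ODE r p -> r 0 = 0 -> p 0 = 1 -> 0 < T ->
  (forall x, 0 <= x < T -> 0 < p x) -> p T = 0 -> r T = 1 ->
  RInt_gen f6 (at_point 0) (at_left 1) = T.
Proof.
  intros HO r0 p0 Tpos below pT rT.
  pose proof (energy r p HO r0 p0) as En.
  destruct HO as [Hr Hp].
  assert (rmono : forall a b, 0 <= a <= b -> b <= T -> r a <= r b).
  { intros a b Hab HbT. assert (- r b <= - r a).
    { apply (mono_le (fun t => - r t) (fun t => - p t)); try lra.
      - intros t _. apply (is_derive_opp r t (p t)). auto.
      - intros t Ht. destruct (Rlt_dec t T). pose proof (below t ltac:(lra)). lra.
        replace t with T by lra. lra. }
    lra. }
  assert (rlt1 : forall b, 0 <= b < T -> 0 <= r b < 1).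
  { intros b Hb. assert (0 <= r b) by (rewrite <- r0; apply rmono; lra).
    split; auto. pose proof (below b Hb). pose proof (En b).
    destruct (Rlt_dec (r b) 1); auto. exfalso.
    assert (1 <= r b ^ 6) by (replace 1 with (1 ^ 6) by ring; apply pow_incr; lra). nra. }
  assert (Phi : forall b, 0 <= b < T -> RInt f6 0 (r b) = b).
  { assert (Hd : forall x, 0 <= x < T -> is_derive (fun b => RInt f6 0 (r b) - b) x 0).
    { intros x Hx. apply (is_derive_eq _ _ (p x * f6 (r x) - 1)).
      - apply (is_derive_minus (fun b => RInt f6 0 (r b)) (fun b => b) x (p x * f6 (r x)) 1).
        + apply (is_derive_comp (fun c => RInt f6 0 c) r x (f6 (r x)) (p x)).
          * apply F_der. destruct (rlt1 x Hx). rewrite Rabs_right; lra.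
          * auto.
        + apply (is_derive_eq _ _ _ _ (is_derive_id x)). reflexivity.
      - unfold f6. replace (1 - r x ^ (2 * 3)) with (p x ^ 2) by (rewrite <- (En x); simpl; ring).
        rewrite sqrt_pow2 by (pose proof (below x Hx); lra).
        change (@eq R (p x * / p x - 1) 0). field. pose proof (below x Hx); lra. }
    intros b Hb.
    assert (RInt f6 0 (r b) - b <= RInt f6 0 (r 0) - 0).
    { apply (mono_le (fun b => RInt f6 0 (r b) - b) (fun _ => 0)); try lra.
      intros x Hx. apply Hd. lra. intros; lra. }
    assert (- (RInt f6 0 (r b) - b) <= - (RInt f6 0 (r 0) - 0)).
    { apply (mono_le (fun b => - (RInt f6 0 (r b) - b)) (fun _ => - 0)); try lra.
      intros x Hx. apply (is_derive_opp (fun b => RInt f6 0 (r b) - b) x 0). apply Hd. lra. intros; lra. }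
    assert (Z0 : RInt f6 0 0 = 0) by (rewrite RInt_point; reflexivity). rewrite r0, Z0 in *. lra. }
  assert (IVT1 : forall c, 0 <= c < 1 -> exists b, 0 <= b < T /\ r b = c).
  { intros c Hc. destruct (IVT_gen r 0 T c) as [b [Hb1 Hb2]].
    - intros x. apply (cont_of_der _ _ _ (Hr x)).
    - rewrite r0, rT. unfold Rmin, Rmax; destruct Rle_dec; lra.
    - exists b. unfold Rmin, Rmax in Hb1; destruct Rle_dec; try lra.
      split; auto. split; try lra. destruct (Req_dec b T); try lra. subst. lra. }
  apply is_RInt_gen_unique.
  intros P [eps HP].
  set (d := Rmin (eps / 2) (T / 2)).
  assert (dpos : 0 < d) by (unfold d, Rmin; destruct Rle_dec; destruct eps; simpl in *; lra).
  assert (dle : d <= eps / 2 /\ d <= T / 2) by (unfold d, Rmin; destruct Rle_dec; lra).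
  destruct (rlt1 (T - d)) as [rd1 rd2]; [lra|].
  apply (Filter_prod _ _ _ (fun a => a = 0) (fun b => r (T - d) < b < 1)).
  - reflexivity.
  - assert (hh : 0 < 1 - r (T - d)) by lra.
    exists (mkposreal _ hh). intros y Hy Hy1. rewrite ball_R in Hy. simpl in Hy.
    apply Rabs_def2 in Hy. lra.
  - intros a b -> [Hb1 Hb2]. simpl.
    destruct (IVT1 b) as [b' [Hb' Hrb']]; [lra|].
    exists (RInt f6 0 b). split.
    + apply (@RInt_correct R_CompleteNormedModule). apply (@ex_RInt_continuous R_CompleteNormedModule).
      intros z Hz. apply f6_cont. unfold Rmin, Rmax in Hz; destruct Rle_dec; apply Rabs_def1; lra.
    + rewrite <- Hrb', Phi by auto. apply HP. rewrite ball_R.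
      assert (T - d < b').
      { destruct (Rlt_dec (T - d) b'); auto. pose proof (rmono b' (T - d) ltac:(lra) ltac:(lra)). lra. }
      rewrite Rabs_left by lra. lra.
Qed.

Lemma alg u v s : v ^ 2 + u ^ 6 = 1 -> s = 2 * u * v * / sqrt (1 + 8 * u ^ 6) ->
  let A := / 2 * sqrt (- 1 - s ^ 2 + 2 * s ^ 4
                       + (2 - 2 * s ^ 6) / sqrt (1 + s ^ 2 + s ^ 4)) in
  (0 <= 1 - 20 * u ^ 6 - 8 * u ^ 12 -> u ^ 2 = - / 2 * s ^ 2 + / 2 * sqrt (1 + s ^ 2 + s ^ 4) - A) /\
  (1 - 20 * u ^ 6 - 8 * u ^ 12 <= 0 -> u ^ 2 = - / 2 * s ^ 2 + / 2 * sqrt (1 + s ^ 2 + s ^ 4) + A).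
Proof.
  intros E Hs A.
  assert (x0 : 0 <= u ^ 2) by apply pow2_ge_0.
  assert (u6 : u ^ 6 = (u ^ 2) ^ 3) by ring.
  assert (u12 : u ^ 12 = (u ^ 2) ^ 6) by ring.
  assert (hD : 0 < 1 + 8 * u ^ 6) by (rewrite u6; pose proof (pow_le _ 3 x0); lra).
  pose proof (sqrt_lt_R0 _ hD) as Dpos. pose proof (sqrt_sqrt _ (Rlt_le _ _ hD)) as DD.
  set (D := sqrt (1 + 8 * u ^ 6)) in *.
  assert (key : s ^ 2 * (1 + 8 * (u ^ 2) ^ 3) = 4 * u ^ 2 * (1 - (u ^ 2) ^ 3)).
  { rewrite Hs. rewrite <- u6. replace (1 - u ^ 6) with (v ^ 2) by lra.
    rewrite <- DD. field. lra. }
  unfold A. clear A.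
  replace (s ^ 4) with ((s ^ 2) ^ 2) by ring.
  replace (s ^ 6) with ((s ^ 2) ^ 3) by ring.
  rewrite u6, u12 in *.
  set (t := s ^ 2) in *. set (x := u ^ 2) in *.
  assert (t0 : 0 <= t) by (unfold t; apply pow2_ge_0).
  assert (hT : 0 < 1 + t + t ^ 2) by nra.
  pose proof (sqrt_lt_R0 _ hT) as Spos. pose proof (sqrt_sqrt _ (Rlt_le _ _ hT)) as SS.
  set (S := sqrt (1 + t + t ^ 2)) in *.
  assert (e2 : S * (2 * x + 1) = 2 * x ^ 2 + 2 * x * t + 1 + t).
  { assert (c0 : 0 <= (2 * x ^ 2 + 2 * x * t + 1 + t) / (2 * x + 1)).
    { apply Rmult_le_pos; [nra|]. left. apply Rinv_0_lt_compat. lra. }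
    assert (S = (2 * x ^ 2 + 2 * x * t + 1 + t) / (2 * x + 1)).
    { unfold S. rewrite <- (sqrt_pow2 _ c0). f_equal.
      apply (Rmult_eq_reg_r ((2 * x + 1) ^ 2)); [|nra].
      field_simplify; [|lra]. nra. }
    rewrite H. field. lra. }
  assert (inner : - 1 - t + 2 * t ^ 2 + (2 - 2 * t ^ 3) / S = (2 * x + t - S) ^ 2).
  { apply (Rmult_eq_reg_r S); [|lra].
    transitivity ((2 * x + t - S) ^ 2 * S + (2 * t - 2 - S) * (S * S - (1 + t + t ^ 2))
                  + 2 * S * (S * (2 * x + 1) - (2 * x ^ 2 + 2 * x * t + 1 + t))).
    - field. lra.
    - rewrite SS, e2. ring. }
  rewrite inner. rewrite <- Rsqr_pow2, sqrt_Rsqr_abs.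
  assert (qfac : (2 * x + t - S) * (2 * x + 1) = 2 * x ^ 2 + 2 * x - 1) by nra.
  assert (pfac : 1 - 20 * x ^ 3 - 8 * x ^ 6 = - (2 * x ^ 2 + 2 * x - 1) * (4 * x ^ 4 - 4 * x ^ 3 + 6 * x ^ 2 + 2 * x + 1)) by ring.
  assert (Qp : 0 < 4 * x ^ 4 - 4 * x ^ 3 + 6 * x ^ 2 + 2 * x + 1).
  { assert (0 <= 2 * x ^ 2 * (2 * x ^ 2 - 2 * x + 3)) by (apply Rmult_le_pos; nra). nra. }
  split; intros Hw.
  - assert (2 * x ^ 2 + 2 * x - 1 <= 0) by nra.
    assert (2 * x + t - S <= 0) by nra.
    rewrite Rabs_left1 by lra. field.
  - assert (0 <= 2 * x ^ 2 + 2 * x - 1) by nra.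
    assert (0 <= 2 * x + t - S) by nra.
    rewrite Rabs_right by lra. field.
Qed.
Theorem mainTheorem14 (sleaf3 : R -> R) (Hs : is_sleaf 3 sleaf3)
  (m : Z) (l : R) :
  let s := sleaf3 l in
  let A := / 2 * sqrt (- 1 - s ^ 2 + 2 * s ^ 4
                       + (2 - 2 * s ^ 6) / sqrt (1 + s ^ 2 + s ^ 4)) in
  (pi_n 3 / 2 * (4 * IZR m - 1) <= l <= pi_n 3 / 2 * (4 * IZR m + 1) ->
     (sleaf3 (l / 2)) ^ 2 = - / 2 * s ^ 2 + / 2 * sqrt (1 + s ^ 2 + s ^ 4) - A) /\
  (pi_n 3 / 2 * (4 * IZR m + 1) <= l <= pi_n 3 / 2 * (4 * IZR m + 3) ->
     (sleaf3 (l / 2)) ^ 2 = - / 2 * s ^ 2 + / 2 * sqrt (1 + s ^ 2 + s ^ 4) + A).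
Proof.
  destruct Hs as [p [Hr [Hp [r0 p0]]]].
  assert (HO : ODE sleaf3 p).
  { split; auto. intros x. apply (is_derive_eq _ _ _ _ (Hp x)). simpl. ring. }
  destruct (period sleaf3 p HO r0 p0) as [T [Tpos [below [pT rT]]]].
  assert (piT : pi_n 3 / 2 = T).
  { unfold pi_n. pose proof (int_T sleaf3 p T HO r0 p0 Tpos below pT rT) as h.
    unfold f6 in h. rewrite h. field. }
  rewrite piT.
  pose proof (sign_p sleaf3 p HO r0 p0 T Tpos below pT rT m l) as [S1 S2].
  destruct (doubling sleaf3 p HO r0 p0 (l / 2)) as [D1 D2].
  replace (2 * (l / 2)) with l in D1, D2 by field.
  pose proof (energy sleaf3 p HO r0 p0 (l / 2)) as En.
  pose proof (alg (sleaf3 (l / 2)) (p (l / 2)) (sleaf3 l) En D1) as [A1 A2].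
  set (u := sleaf3 (l / 2)) in *.
  assert (hD : 0 < 1 + 8 * u ^ 6) by (pose proof (pow6_nonneg u); lra).
  assert (zp : 0 < (/ sqrt (1 + 8 * u ^ 6)) ^ 3).
  { apply pow_lt. apply Rinv_0_lt_compat. apply sqrt_lt_R0. auto. }
  intros s A. split; intros Hl.
  - apply A1. specialize (S1 Hl).
    destruct (Rle_dec 0 (1 - 20 * u ^ 6 - 8 * u ^ 12)); auto. nra.
  - apply A2. specialize (S2 Hl).
    destruct (Rle_dec (1 - 20 * u ^ 6 - 8 * u ^ 12) 0); auto. nra.
Qed.
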